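(* Let $\sigma>0$, $k\in\{0,1,2\}$, $l\in\{0,1\}$, and let $f$ be $(\sigma',2)$-Gevrey regular on $[0,1]$ for some $\sigma'>\sigma$. If $u\in G_{\sigma,k,l}$ then $fu\in G_{\sigma,k,l}$ and $\|fu\|_{\sigma,k,l}\le C\|u\|_{\sigma,k,l}$, where $C$ depends only on $\sigma,\sigma',k,l$ and $f$.
   Context: Let $I=(0,1)$. A function $u\in C^\infty(\overline I)$ is $(\sigma,k)$-Gevrey regular ($\sigma,k>0$) if there is $C>0$ with $\sup_{x\in I}|u^{(n)}(x)|\le C\sigma^{-n}(n!)^k$ for all $n\ge0$. For $\sigma>0$, $u\in C^\infty(\overline I)$, $k\in\{0,1,2\}$, $l\in\{0,1\}$, set $|u|^{0}_{\sigma,k,l}=\big(\sum_{n=0}^\infty\frac{\sigma^{2n}}{n!^2(n+1)!^2}n^{k+l}\int_0^1(x/\sigma)^k|\partial_x^nu|^2dx\big)^{1/2}$ (with $0^0:=1$); $\|u\|_{\sigma,0,0}=|u|^0_{\sigma,0,0}$, and for $k+l>0$, $\|u\|_{\sigma,k,l}=|u|^0_{\sigma,k,l}+(\int_0^1(x/\sigma)^k|u|^2dx)^{1/2}$. $G_{\sigma,k,l}=\{u\in C^\infty(\overline I):\|u\|_{\sigma,k,l}<\infty\}$. *)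

(* Defs.v *)
From Stdlib Require Import Reals Lra Lia Arith ClassicalEpsilon.
Open Scope R_scope.

Definition deriv01 (g : R -> R) (x l : R) : Prop :=
  forall eps, 0 < eps -> exists delta, 0 < delta /\
    forall h, h <> 0 -> Rabs h < delta -> 0 <= x + h <= 1 ->
      Rabs ((g (x + h) - g x) / h - l) < eps.

Definition smooth01 (u : R -> R) (D : nat -> R -> R) : Prop :=
  (forall x, 0 <= x <= 1 -> D 0%nat x = u x) /\
  (forall n x, 0 <= x <= 1 -> deriv01 (D n) x (D (S n) x)).

Definition gevrey (sigma : R) (k : nat) (D : nat -> R -> R) : Prop :=
  exists C, forall n x, 0 < x < 1 ->
    Rabs (D n x) <= C * (/ sigma) ^ n * (INR (fact n)) ^ k.

(* Riemann integral over [0,1] (the integrands used are continuous). *)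
Definition Int01 (g : R -> R) : R :=
  epsilon (inhabits 0)
    (fun v => exists pr : Riemann_integrable g 0 1, RiemannInt pr = v).

(* n-th term of the series defining (|u|^0_{sigma,k,l})^2; note 0^0 = 1 for pow. *)
Definition gterm (sigma : R) (k l : nat) (D : nat -> R -> R) (n : nat) : R :=
  sigma ^ (2 * n) / (INR (fact n) ^ 2 * INR (fact (n + 1)) ^ 2)
  * INR n ^ (k + l) * Int01 (fun x => (x / sigma) ^ k * (D n x) ^ 2).

Definition in_G (sigma : R) (k l : nat) (D : nat -> R -> R) : Prop :=
  exists s, Un_cv (fun N => sum_f_R0 (gterm sigma k l D) N) s.

Definition seminorm0 (sigma : R) (k l : nat) (D : nat -> R -> R) : R :=
  sqrt (epsilon (inhabits 0)
    (fun s => Un_cv (fun N => sum_f_R0 (gterm sigma k l D) N) s)).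

Definition gnorm (sigma : R) (k l : nat) (D : nat -> R -> R) : R :=
  if Nat.eqb (k + l) 0 then seminorm0 sigma k l D
  else seminorm0 sigma k l D
       + sqrt (Int01 (fun x => (x / sigma) ^ k * (D 0%nat x) ^ 2)).

(* Main.v *)
Require Import Defs.
From Stdlib Require Import Reals Lra Lia Arith Psatz ClassicalEpsilon.
Open Scope R_scope.


Definition D01 (x : R) := fun h : R => h <> 0 /\ 0 <= x + h <= 1.

Lemma deriv01_lim g x l :
  deriv01 g x l <-> limit1_in (fun h => (g (x+h) - g x)/h) (D01 x) l 0.
Proof.
  unfold deriv01, limit1_in, limit_in, D01; simpl; unfold R_dist; split.
  - intros H eps He; destruct (H eps He) as [d [Hd Hh]]; exists d; split; auto.
    intros h [[H1 H2] H3]. apply Hh; auto. rewrite Rminus_0_r in H3; auto.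
  - intros H eps He; destruct (H eps He) as [d [Hd Hh]]; exists d; split; auto.
    intros h H1 H2 H3. apply Hh. split; auto. rewrite Rminus_0_r; auto.
Qed.

Lemma deriv01_cont g x l : deriv01 g x l ->
  limit1_in (fun h => g (x+h)) (D01 x) (g x) 0.
Proof.
  intro H; apply deriv01_lim in H.
  assert (H2 := limit_plus _ _ _ _ _ _ (limit_free (fun _ => g x) (D01 x) 0 0)
     (limit_mul _ _ _ _ _ _ (lim_x (D01 x) 0) H)).
  rewrite Rmult_0_l, Rplus_0_r in H2.
  eapply limit1_ext; [|exact H2]. intros h [Hh _]; simpl. field; auto.
Qed.

Lemma deriv01_mult f g x a b : deriv01 f x a -> deriv01 g x b ->
  deriv01 (fun y => f y * g y) x (a * g x + f x * b).
Proof.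
  intros Hf Hg. assert (Cf := deriv01_cont _ _ _ Hf).
  apply deriv01_lim in Hf; apply deriv01_lim in Hg; apply deriv01_lim.
  assert (H := limit_plus _ _ _ _ _ _
     (limit_mul _ _ _ _ _ _ Hf (limit_free (fun _ => g x) (D01 x) 0 0))
     (limit_mul _ _ _ _ _ _ Cf Hg)).
  eapply limit1_ext; [|exact H]. intros h [Hh _]; simpl. field; auto.
Qed.

Lemma deriv01_plus f g x a b : deriv01 f x a -> deriv01 g x b ->
  deriv01 (fun y => f y + g y) x (a + b).
Proof.
  intros Hf Hg. apply deriv01_lim in Hf; apply deriv01_lim in Hg; apply deriv01_lim.
  assert (H := limit_plus _ _ _ _ _ _ Hf Hg).
  eapply limit1_ext; [|exact H]. intros h [Hh _]; simpl. field; auto.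
Qed.

Lemma deriv01_scal c f x a : deriv01 f x a ->
  deriv01 (fun y => c * f y) x (c * a).
Proof.
  intros Hf. apply deriv01_lim in Hf; apply deriv01_lim.
  assert (H := limit_mul _ _ _ _ _ _ (limit_free (fun _ => c) (D01 x) 0 0) Hf).
  eapply limit1_ext; [|exact H]. intros h [Hh _]; simpl. field; auto.
Qed.

Lemma deriv01_sum (F : nat -> R -> R) (L : nat -> R) x n :
  (forall j, (j <= n)%nat -> deriv01 (F j) x (L j)) ->
  deriv01 (fun y => sum_f_R0 (fun j => F j y) n) x (sum_f_R0 L n).
Proof.
  induction n; intros H; simpl.
  - apply H; lia.
  - apply deriv01_plus; [apply IHn; intros; apply H; lia | apply H; lia].
Qed.

Fixpoint bin (n k : nat) : nat :=
  match n, k with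
  | _, O => 1%nat
  | O, S _ => 0%nat
  | S n', S k' => (bin n' k' + bin n' (S k'))%nat
  end.

Lemma bin_gt n : forall k, (n < k)%nat -> bin n k = 0%nat.
Proof.
  induction n; intros k Hk; destruct k; simpl; try lia; auto.
  rewrite !IHn; lia.
Qed.

Definition LS (n : nat) (a b : nat -> R) : R :=
  sum_f_R0 (fun j => INR (bin n j) * a j * b (n - j)%nat) n.

Lemma LS_S n a b : LS (S n) a b = LS n (fun j => a (S j)) b + LS n a (fun j => b (S j)).
Proof.
  unfold LS.
  set (T := sum_f_R0 (fun j => INR (bin n j) * a j * b (S n - j)%nat) (S n)).
  assert (E1 : T = sum_f_R0 (fun j => INR (bin n j) * a j * b (S (n - j))%nat) n).
  { unfold T; rewrite tech5. rewrite (bin_gt n (S n)) by lia. simpl INR.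
    rewrite Rmult_0_l, Rmult_0_l, Rplus_0_r. apply sum_eq; intros i Hi.
    rewrite Nat.sub_succ_l by lia; reflexivity. }
  assert (E2 : T = INR (bin n 0) * a 0%nat * b (S n) +
     sum_f_R0 (fun i => INR (bin n (S i)) * a (S i) * b (n - i)%nat) n).
  { unfold T; rewrite decomp_sum by lia. simpl pred. rewrite Nat.sub_0_r. reflexivity. }
  rewrite decomp_sum by lia. simpl pred.
  replace (sum_f_R0 (fun i => INR (bin (S n) (S i)) * a (S i) * b (S n - S i)%nat) n)
    with (sum_f_R0 (fun i => INR (bin n i) * a (S i) * b (n - i)%nat) n +
          sum_f_R0 (fun i => INR (bin n (S i)) * a (S i) * b (n - i)%nat) n).
  2:{ rewrite <- plus_sum. apply sum_eq; intros i Hi. simpl bin. rewrite plus_INR.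
      replace (S n - S i)%nat with (n - i)%nat by lia. ring. }
  rewrite <- E1. rewrite E2. simpl bin. rewrite Nat.sub_0_r.
  destruct n; simpl bin; ring.
Qed.

Lemma deriv01_ext f g x l l' : (forall y, f y = g y) -> l = l' -> deriv01 f x l -> deriv01 g x l'.
Proof. intros H E D eps He; destruct (D eps He) as [d [Hd Hh]]; exists d; split; auto.
  intros; rewrite <- !H, <- E; auto. Qed.

Definition prodD (Df Du : nat -> R -> R) : nat -> R -> R :=
  fun n y => LS n (fun j => Df j y) (fun j => Du j y).

Lemma smooth_prod f Df u Du : smooth01 f Df -> smooth01 u Du ->
  smooth01 (fun x => f x * u x) (prodD Df Du).
Proof.
  intros [F0 F1] [U0 U1]; split.
  - intros x Hx; unfold prodD, LS; simpl. rewrite F0, U0 by auto. ring.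
  - intros n x Hx. unfold prodD. rewrite LS_S. unfold LS.
    eapply deriv01_ext; [intro y; reflexivity| |].
    2:{ apply (deriv01_sum (fun j y => INR (bin n j) * Df j y * Du (n - j)%nat y)
          (fun j => INR (bin n j) * (Df (S j) x * Du (n-j)%nat x + Df j x * Du (S (n-j)) x))).
        intros j Hj. eapply deriv01_ext; [intro y; exact (eq_sym (Rmult_assoc _ _ _))|reflexivity|].
        apply deriv01_scal. apply deriv01_mult; auto. }
    rewrite <- plus_sum. apply sum_eq; intros; ring.
Qed.


Definition cont01 (g : R -> R) := forall x, 0 <= x <= 1 ->
  limit1_in (fun h => g (x+h)) (D01 x) (g x) 0.

Lemma cont01_mult f g : cont01 f -> cont01 g -> cont01 (fun y => f y * g y).
Proof. intros Hf Hg x Hx. exact (limit_mul _ _ _ _ _ _ (Hf x Hx) (Hg x Hx)). Qed.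

Lemma cont01_const c : cont01 (fun _ => c).
Proof. intros x Hx. exact (limit_free (fun _ => c) _ 0 0). Qed.

Lemma cont01_lin a : cont01 (fun y => y * a).
Proof. intros x Hx.
  assert (H := limit_mul _ _ _ _ _ _ (limit_plus _ _ _ _ _ _ (limit_free (fun _ => x) (D01 x) 0 0) (lim_x (D01 x) 0)) (limit_free (fun _ => a) (D01 x) 0 0)).
  rewrite Rplus_0_r in H. exact H. Qed.

Lemma cont01_pow g k : cont01 g -> cont01 (fun y => g y ^ k).
Proof. intros H; induction k; simpl.
  - apply cont01_const.
  - apply (cont01_mult g (fun y => g y ^ k)); auto. Qed.

Lemma smooth_cont u D : smooth01 u D -> forall n, cont01 (D n).
Proof. intros [_ H] n x Hx. exact (deriv01_cont _ _ _ (H n x Hx)). Qed.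

Definition clamp (y : R) := Rmax 0 (Rmin 1 y).

Lemma cont01_integrable g : cont01 g -> Riemann_integrable g 0 1.
Proof.
  intros H.
  assert (I : Riemann_integrable (fun y => g (clamp y)) 0 1).
  { apply continuity_implies_RiemannInt; [lra|]. intros x Hx.
    unfold continuity_pt, continue_in, limit1_in, limit_in; simpl; unfold R_dist.
    intros eps He. destruct (H x Hx eps He) as [d [Hd Hh]]. simpl in Hh; unfold R_dist in Hh.
    exists d; split; auto. intros y [_ Hy].
    assert (Cx : clamp x = x) by (unfold clamp, Rmax, Rmin; repeat destruct Rle_dec; lra).
    rewrite Cx.
    destruct (Req_dec (clamp y - x) 0) as [E|E].
    - replace (clamp y) with x by lra. rewrite Rminus_diag, Rabs_R0; auto.
    - replace (clamp y) with (x + (clamp y - x)) by ring. apply Hh. split.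
      + split; auto. unfold clamp, Rmax, Rmin; repeat destruct Rle_dec; lra.
      + rewrite Rminus_0_r. eapply Rle_lt_trans; [|exact Hy].
        unfold clamp, Rmax, Rmin; repeat destruct Rle_dec;
        unfold Rabs; repeat destruct Rcase_abs; lra. }
  eapply Riemann_integrable_ext; [|exact I]. intros y Hy.
  rewrite Rmin_left, Rmax_right in Hy by lra.
  unfold clamp, Rmax, Rmin; repeat destruct Rle_dec; f_equal; lra.
Qed.

Lemma Int01_eq g (pr : Riemann_integrable g 0 1) : Int01 g = RiemannInt pr.
Proof.
  unfold Int01. destruct (epsilon_spec (inhabits 0)
    (fun v => exists pr : Riemann_integrable g 0 1, RiemannInt pr = v)) as [pr' E].
  - exists (RiemannInt pr); exists pr; reflexivity.
  - rewrite <- E; apply RiemannInt_P5.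
Qed.

Lemma Int01_le f g : Riemann_integrable f 0 1 -> Riemann_integrable g 0 1 ->
  (forall x, 0 < x < 1 -> f x <= g x) -> Int01 f <= Int01 g.
Proof. intros pf pg H. rewrite (Int01_eq f pf), (Int01_eq g pg).
  apply RiemannInt_P19; auto; lra. Qed.

Lemma Int01_ge0 f : Riemann_integrable f 0 1 ->
  (forall x, 0 < x < 1 -> 0 <= f x) -> 0 <= Int01 f.
Proof. intros pf H.
  assert (p0 := RiemannInt_P14 0 1 0).
  assert (E : Int01 (fct_cte 0) = 0).
  { rewrite (Int01_eq _ p0), RiemannInt_P15; ring. }
  rewrite <- E. apply Int01_le; auto. Qed.

Lemma Int01_sum (c : nat -> R) (G : nat -> R -> R) n :
  (forall j, (j <= n)%nat -> Riemann_integrable (G j) 0 1) ->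
  prod (Riemann_integrable (fun x => sum_f_R0 (fun j => c j * G j x) n) 0 1)
  (Int01 (fun x => sum_f_R0 (fun j => c j * G j x) n) = sum_f_R0 (fun j => c j * Int01 (G j)) n).
Proof.
  induction n; intros H; simpl.
  - assert (p := H 0%nat (le_n _)).
    assert (p0 := RiemannInt_P14 0 1 0).
    assert (q := RiemannInt_P10 (c 0%nat) p0 p).
    assert (q' : Riemann_integrable (fun x => c 0%nat * G 0%nat x) 0 1).
    { eapply Riemann_integrable_ext; [|exact q]. intros; unfold fct_cte; ring. }
    split; auto. rewrite (Int01_eq _ q'), (Int01_eq _ p).
    assert (E := RiemannInt_P13 p0 p q). rewrite RiemannInt_P15 in E.
    rewrite <- (RiemannInt_P18 q q'); [lra|lra|]. intros; unfold fct_cte; ring.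
  - destruct IHn as [p1 E1]; [intros; apply H; lia|].
    assert (p := H (S n) (le_n _)).
    assert (q := RiemannInt_P10 (c (S n)) p1 p).
    split; auto. rewrite (Int01_eq _ q), (Int01_eq _ p), RiemannInt_P13 with (pr1 := p1) (pr2 := p).
    rewrite <- (Int01_eq _ p1), E1. reflexivity.
Qed.


Lemma sum_ge0 (a : nat -> R) n : (forall j, (j <= n)%nat -> 0 <= a j) -> 0 <= sum_f_R0 a n.
Proof. induction n; intros H; simpl. apply H; lia.
  assert (0 <= a (S n)) by (apply H; lia). assert (0 <= sum_f_R0 a n) by (apply IHn; intros; apply H; lia). lra. Qed.

Lemma sum_pos (a : nat -> R) n : (forall j, (j <= n)%nat -> 0 < a j) -> 0 < sum_f_R0 a n.
Proof. induction n; intros H; simpl. apply H; lia.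
  assert (0 < a (S n)) by (apply H; lia). assert (0 < sum_f_R0 a n) by (apply IHn; intros; apply H; lia). lra. Qed.

Lemma CS_weighted (y th : nat -> R) n : (forall j, (j <= n)%nat -> 0 < th j) ->
  (sum_f_R0 y n)^2 <= sum_f_R0 th n * sum_f_R0 (fun j => y j ^ 2 / th j) n.
Proof.
  induction n; intros H.
  - simpl. assert (0 < th 0%nat) by (apply H; lia). right; field; lra.
  - rewrite !tech5. assert (Ht : 0 < th (S n)) by (apply H; lia).
    assert (IH : (sum_f_R0 y n)^2 <= sum_f_R0 th n * sum_f_R0 (fun j => y j ^ 2 / th j) n)
      by (apply IHn; intros; apply H; lia).
    assert (HT : 0 < sum_f_R0 th n) by (apply sum_pos; intros; apply H; lia).
    assert (HS : 0 <= sum_f_R0 (fun j => y j ^ 2 / th j) n).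
    { apply sum_ge0; intros j Hj. assert (0 < th j) by (apply H; lia).
      unfold Rdiv; apply Rmult_le_pos; [nra|left; apply Rinv_0_lt_compat; lra]. }
    set (A := sum_f_R0 y n) in *; set (T := sum_f_R0 th n) in *;
    set (Ss := sum_f_R0 (fun j => y j ^ 2 / th j) n) in *;
    set (t := th (S n)) in *; set (v := y (S n)).
    set (z := v / t).
    replace (v ^ 2 / t) with (z * z * t) by (unfold z; field; lra).
    replace v with (z * t) by (unfold z; field; lra).
    assert (K : T * (T * z * z + Ss - 2 * A * z) = (T*z - A)^2 + (T*Ss - A^2)) by ring.
    assert (K2 : 0 <= T * (T * z * z + Ss - 2 * A * z)) by (rewrite K; assert (0 <= (T*z-A)^2) by (apply pow2_ge_0); lra).
    assert (K3 : 0 <= T * z * z + Ss - 2 * A * z).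
    { destruct (Rle_lt_dec 0 (T * z * z + Ss - 2 * A * z)); auto. nra. }
    assert (K4 : 0 <= t * (T * z * z + Ss - 2 * A * z)) by nra.
    nra.
Qed.


Lemma bin_pos n : forall j, (j <= n)%nat -> (1 <= bin n j)%nat.
Proof. induction n; intros j Hj; destruct j; simpl; try lia.
  assert (1 <= bin n j)%nat by (apply IHn; lia). lia. Qed.

Lemma fact_S_R n : INR (fact (S n)) = INR (S n) * INR (fact n).
Proof. change (fact (S n)) with (S n * fact n)%nat. apply mult_INR. Qed.

Lemma bin_fact n : forall j, (j <= n)%nat ->
  INR (bin n j) * INR (fact j) * INR (fact (n - j)) = INR (fact n).
Proof.
  induction n; intros j Hj.
  - destruct j; [simpl; ring | lia].
  - destruct j.
    + simpl bin. simpl (fact 0). rewrite Nat.sub_0_r. simpl INR at 1 2; ring.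
    + change (bin (S n) (S j)) with (bin n j + bin n (S j))%nat.
      replace (S n - S j)%nat with (n - j)%nat by lia.
      rewrite plus_INR, (fact_S_R n), (fact_S_R j).
      assert (E1 := IHn j ltac:(lia)).
      destruct (Nat.eq_dec j n) as [->|Hne].
      * rewrite (bin_gt n (S n)) by lia. rewrite Nat.sub_diag in *.
        change (INR (fact 0)) with 1 in *. change (INR 0) with 0.
        replace ((INR (bin n n) + 0) * (INR (S n) * INR (fact n)) * 1)
          with (INR (S n) * (INR (bin n n) * INR (fact n) * 1)) by ring.
        rewrite E1. ring.
      * assert (E2 := IHn (S j) ltac:(lia)).
        replace (n - j)%nat with (S (n - S j)) in * by lia. rewrite (fact_S_R (n - S j)) in *.
        rewrite (fact_S_R j) in E2.
        set (b1 := INR (bin n j)) in *. set (b2 := INR (bin n (S j))) in *.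
        set (Fj := INR (fact j)) in *. set (G := INR (fact (n - S j))) in *.
        set (F := INR (fact n)) in *.
        assert (Hd : INR (S (n - S j)) = INR n - INR j) by (rewrite S_INR, minus_INR by lia; rewrite S_INR; ring).
        rewrite Hd in *.
        replace ((b1 + b2) * (INR (S j) * Fj) * ((INR n - INR j) * G))
          with (INR (S j) * (b1 * Fj * ((INR n - INR j) * G)) + (INR n - INR j) * (b2 * (INR (S j) * Fj) * G)) by ring.
        rewrite E1, E2, !S_INR. ring.
Qed.

Definition alpha (sigma : R) (n : nat) : R :=
  sigma ^ (2 * n) / (INR (fact n) ^ 2 * INR (fact (n + 1)) ^ 2).

Lemma INR_fact_pos n : 0 < INR (fact n).
Proof. apply lt_0_INR, lt_O_fact. Qed.

Lemma coef_bound s s' n j : 0 < s -> 0 < s' -> (j <= n)%nat ->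
  alpha s n * INR (bin n j) ^ 2 * ((/ s') ^ j * INR (fact j) ^ 2) ^ 2
  <= (s / s') ^ (2 * j) * alpha s (n - j).
Proof.
  intros Hs Hs' Hj. unfold alpha.
  set (m := (n - j)%nat).
  assert (E1 := bin_fact n j Hj). fold m in E1.
  assert (E2 := bin_fact (n + 1) j ltac:(lia)).
  replace (n + 1 - j)%nat with (m + 1)%nat in E2 by (unfold m; lia).
  assert (Hb := bin_pos (n+1) j ltac:(lia)). apply le_INR in Hb. simpl (INR 1) in Hb.
  replace (2 * n)%nat with (2 * j + 2 * m)%nat by (unfold m; lia).
  assert (Q1 : s ^ (2 * j + 2 * m) = (s ^ j) ^ 2 * (s ^ m) ^ 2).
  { rewrite pow_add, <- !pow_mult, !(Nat.mul_comm 2). reflexivity. }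
  assert (Q2 : (s / s') ^ (2 * j) = (s ^ j) ^ 2 * ((/ s') ^ j) ^ 2).
  { unfold Rdiv. rewrite Rpow_mult_distr, <- !pow_mult, !(Nat.mul_comm 2). reflexivity. }
  assert (Q3 : s ^ (2 * m) = (s ^ m) ^ 2).
  { rewrite <- !pow_mult, !(Nat.mul_comm 2). reflexivity. }
  rewrite Q1, Q2, Q3. rewrite <- E1, <- E2.
  assert (P1 := INR_fact_pos j). assert (P2 := INR_fact_pos m). assert (P3 := INR_fact_pos (m+1)).
  assert (P4 : 0 < s ^ j) by (apply pow_lt; lra).
  assert (P5 : 0 < s ^ m) by (apply pow_lt; lra).
  assert (P6 : 0 < (/ s') ^ j) by (apply pow_lt; apply Rinv_0_lt_compat; lra).
  assert (P7 : 0 < INR (bin n j)).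
  { assert (H := bin_pos n j Hj). apply le_INR in H. simpl in H. lra. }
  set (B := INR (bin n j)) in *. set (B' := INR (bin (n+1) j)) in *.
  set (Fj := INR (fact j)) in *. set (Fm := INR (fact m)) in *. set (Fm1 := INR (fact (m+1))) in *.
  set (a := s ^ j) in *. set (b := s ^ m) in *. set (c := (/ s') ^ j) in *.
  replace (a ^ 2 * b ^ 2 / ((B * Fj * Fm) ^ 2 * (B' * Fj * Fm1) ^ 2) * B ^ 2 * (c * Fj ^ 2) ^ 2)
    with ((a ^ 2 * c ^ 2 * (b ^ 2 / (Fm ^ 2 * Fm1 ^ 2))) / B' ^ 2)
    by (field; repeat split; lra).
  set (R0 := a ^ 2 * c ^ 2 * (b ^ 2 / (Fm ^ 2 * Fm1 ^ 2))).
  assert (0 < R0).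
  { unfold R0. assert (0 < a^2) by (apply pow_lt; auto). assert (0 < b^2) by (apply pow_lt; auto).
    assert (0 < c^2) by (apply pow_lt; auto). assert (0 < Fm^2) by (apply pow_lt; auto).
    assert (0 < Fm1^2) by (apply pow_lt; auto).
    apply Rmult_lt_0_compat; [apply Rmult_lt_0_compat; auto|].
    apply Rdiv_lt_0_compat; auto. apply Rmult_lt_0_compat; auto. }
  apply Rmult_le_reg_r with (B' ^ 2); [nra|]. unfold Rdiv; rewrite Rmult_assoc, Rinv_l by nra.
  replace (a ^ 2 * c ^ 2 * (b ^ 2 * / (Fm ^ 2 * Fm1 ^ 2))) with R0 by (unfold R0, Rdiv; ring).
  assert (1 <= B' ^ 2) by nra. nra.
Qed.

Lemma bernoulli t j : 0 <= t -> 1 + INR j * t <= (1 + t) ^ j.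
Proof. intros Ht; induction j. simpl; lra. rewrite S_INR. simpl pow.
  assert (0 <= INR j) by apply pos_INR. nra. Qed.

Lemma gamma_bound q : 0 < q < 1 -> exists G, forall N,
  sum_f_R0 (fun j => q ^ j * (1 + INR j) ^ 3) N <= G.
Proof.
  intros Hq. set (t := Rmin 1 ((1 - q) / (14 * q))).
  assert (Ht1 : t <= 1) by apply Rmin_l.
  assert (Ht0 : 0 < t).
  { unfold t, Rmin; destruct Rle_dec; [lra|]. apply Rdiv_lt_0_compat; lra. }
  assert (Ht2 : t <= (1 - q) / (14 * q)) by apply Rmin_r.
  assert (Ht3 : 14 * q * t <= 1 - q).
  { apply Rmult_le_compat_l with (r := 14 * q) in Ht2; [|lra].
    replace (14 * q * ((1 - q) / (14 * q))) with (1 - q) in Ht2 by (field; lra). lra. }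
  set (r := q * (1 + t) ^ 3).
  assert (Hr : 0 <= r < 1).
  { unfold r; split. apply Rmult_le_pos; [lra|]. apply pow_le; lra.
    simpl. nra. }
  exists (/ (t ^ 3 * (1 - r))).
  intros N. apply Rle_trans with (sum_f_R0 (fun j => r ^ j * / t ^ 3) N).
  - apply sum_Rle; intros j _.
    assert (B := bernoulli t j (Rlt_le _ _ Ht0)).
    assert (0 <= INR j) by apply pos_INR.
    assert (H1 : t * (1 + INR j) <= (1 + t) ^ j) by nra.
    assert (H2 : (t * (1 + INR j)) ^ 3 <= ((1 + t) ^ j) ^ 3).
    { apply pow_incr; split; [nra|auto]. }
    unfold r. rewrite Rpow_mult_distr, <- pow_mult, Nat.mul_comm, pow_mult.
    rewrite Rpow_mult_distr in H2.
    assert (0 < q ^ j) by (apply pow_lt; lra).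
    assert (0 < t ^ 3) by (apply pow_lt; lra).
    apply Rmult_le_reg_r with (t ^ 3); auto.
    rewrite (Rmult_assoc (q ^ j * ((1 + t) ^ j) ^ 3)), Rinv_l, Rmult_1_r by lra.
    replace (q ^ j * (1 + INR j) ^ 3 * t ^ 3) with (q ^ j * (t ^ 3 * (1 + INR j) ^ 3)) by ring.
    apply Rmult_le_compat_l; lra.
  - rewrite <- scal_sum.
    assert (0 < t ^ 3) by (apply pow_lt; lra).
    rewrite tech3 by lra.
    assert (0 <= r ^ S N) by (apply pow_le; lra).
    rewrite Rinv_mult. apply Rmult_le_compat_l.
    + left; apply Rinv_0_lt_compat; auto.
    + unfold Rdiv. rewrite <- (Rmult_1_l (/ (1 - r))) at 2. apply Rmult_le_compat_r; [left; apply Rinv_0_lt_compat; lra| lra].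
Qed.

Lemma cauchy_le N : forall (g b : nat -> R), (forall j, 0 <= g j) -> (forall j, 0 <= b j) ->
  sum_f_R0 (fun n => sum_f_R0 (fun j => g j * b (n - j)%nat) n) N
  <= sum_f_R0 g N * sum_f_R0 b N.
Proof.
  induction N; intros g b Hg Hb.
  - simpl. lra.
  - rewrite (decomp_sum _ (S N)) by lia. simpl pred.
    rewrite (decomp_sum g (S N)) by lia. rewrite (decomp_sum b (S N)) by lia. simpl pred.
    assert (E : forall n, sum_f_R0 (fun j => g j * b (S n - j)%nat) (S n) =
       g 0%nat * b (S n) + sum_f_R0 (fun j => g (S j) * b (n - j)%nat) n).
    { intro n. rewrite decomp_sum by lia. simpl pred. reflexivity. }
    rewrite (sum_eq _ _ N (fun n _ => E n)), plus_sum.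
    assert (IH := IHN (fun j => g (S j)) b (fun j => Hg (S j)) Hb).
    simpl (sum_f_R0 (fun j => g j * b (0 - j)%nat) 0).
    assert (E2 : sum_f_R0 (fun i => g 0%nat * b (S i)) N = g 0%nat * sum_f_R0 (fun i => b (S i)) N).
    { rewrite scal_sum. apply sum_eq; intros; ring. }
    rewrite E2.
    assert (0 <= sum_f_R0 (fun i => g (S i)) N) by (apply sum_ge0; auto).
    assert (0 <= b 0%nat) by auto.
    assert (Hbn : sum_f_R0 b N <= b 0%nat + sum_f_R0 (fun i => b (S i)) N).
    { assert (D := decomp_sum b (S N) ltac:(lia)). simpl pred in D. rewrite <- D.
      rewrite tech5. assert (0 <= b (S N)) by auto. lra. }
    assert (sum_f_R0 (fun i => g (S i)) N * sum_f_R0 b N <=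
            sum_f_R0 (fun i => g (S i)) N * (b 0%nat + sum_f_R0 (fun i => b (S i)) N))
      by (apply Rmult_le_compat_l; auto).
    simpl (0 - 0)%nat. nra.
Qed.


Lemma w_integrable s k D u : smooth01 u D -> forall n,
  Riemann_integrable (fun x => (x / s) ^ k * (D n x) ^ 2) 0 1.
Proof. intros H n. apply cont01_integrable.
  apply (cont01_mult (fun x => (x / s) ^ k) (fun x => D n x ^ 2)).
  - apply (cont01_pow (fun x => x / s)). exact (cont01_lin (/ s)).
  - apply cont01_pow. exact (smooth_cont _ _ H n). Qed.

Lemma w_ge0 s k (g : R -> R) x : 0 < s -> 0 < x -> 0 <= (x / s) ^ k * g x ^ 2.
Proof. intros Hs Hx. apply Rmult_le_pos; [apply pow_le; unfold Rdiv; apply Rmult_le_pos; [lra|left; apply Rinv_0_lt_compat; lra] | apply pow2_ge_0]. Qed.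

Lemma I_ge0 s k D u n : 0 < s -> smooth01 u D -> 0 <= Int01 (fun x => (x / s) ^ k * (D n x) ^ 2).
Proof. intros Hs H. apply Int01_ge0. apply (w_integrable s k D u H). intros x Hx; apply w_ge0; lra. Qed.

Lemma alpha_ge0 s n : 0 < s -> 0 <= alpha s n.
Proof. intros Hs; unfold alpha. assert (0 < INR (fact n)) by apply INR_fact_pos.
  assert (0 < INR (fact (n+1))) by apply INR_fact_pos.
  apply Rmult_le_pos; [apply pow_le; lra|]. left; apply Rinv_0_lt_compat.
  apply Rmult_lt_0_compat; apply pow_lt; auto. Qed.

Lemma gterm_eq s k l D n : gterm s k l D n = alpha s n * INR n ^ (k + l) * Int01 (fun x => (x / s) ^ k * (D n x) ^ 2).
Proof. reflexivity. Qed.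

Lemma gterm_ge0 s k l D u n : 0 < s -> smooth01 u D -> 0 <= gterm s k l D n.
Proof. intros Hs H. rewrite gterm_eq. apply Rmult_le_pos; [apply Rmult_le_pos; [apply alpha_ge0; auto| apply pow_le, pos_INR]|].
  eapply I_ge0; eauto. Qed.

Lemma lim_le U l B : Un_cv U l -> (forall n, U n <= B) -> l <= B.
Proof. intros H HB. destruct (Rle_lt_dec l B) as [|Hlt]; auto.
  destruct (H (l - B)) as [N HN]; [lra|]. specialize (HN N (le_n _)). specialize (HB N).
  unfold Rdist, Rabs in HN. destruct Rcase_abs in HN; lra. Qed.

Lemma sqrt_add_le a b : 0 <= a -> 0 <= b -> sqrt (a + b) <= sqrt a + sqrt b.
Proof. intros Ha Hb. assert (0 <= sqrt a) by apply sqrt_pos. assert (0 <= sqrt b) by apply sqrt_pos.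
  rewrite <- (sqrt_square (sqrt a + sqrt b)) by lra. apply sqrt_le_1_alt.
  assert (sqrt a * sqrt a = a) by (apply sqrt_sqrt; auto).
  assert (sqrt b * sqrt b = b) by (apply sqrt_sqrt; auto). nra. Qed.

Lemma nK_bound (n j K : nat) : (j <= n)%nat -> (K <= 3)%nat -> (1 <= n - j)%nat ->
  INR n ^ K <= (1 + INR j) ^ 3 * INR (n - j) ^ K.
Proof.
  intros Hj HK Hm. set (m := (n - j)%nat) in *.
  assert (Hn : INR n = INR m + INR j) by (unfold m; rewrite <- plus_INR; f_equal; lia).
  assert (Hm1 : 1 <= INR m) by (apply (le_INR 1); lia).
  assert (0 <= INR j) by apply pos_INR.
  apply Rle_trans with (((1 + INR j) * INR m) ^ K).
  - apply pow_incr. split. apply pos_INR. rewrite Hn. nra.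
  - rewrite Rpow_mult_distr. apply Rmult_le_compat_r. apply pow_le; lra.
    apply Rle_pow; [lra|auto].
Qed.

Lemma n0_bound (n K : nat) : (K <= 3)%nat -> INR n ^ K <= (1 + INR n) ^ 3.
Proof. intros HK. assert (0 <= INR n) by apply pos_INR.
  apply Rle_trans with ((1 + INR n) ^ K). apply pow_incr; lra. apply Rle_pow; [lra|auto]. Qed.

Lemma alpha0 s : alpha s 0 = 1.
Proof. unfold alpha; simpl. field. Qed.

Definition bseq s k l (Du : nat -> R -> R) (m : nat) : R :=
  gterm s k l Du m + (if Nat.eqb m 0 then Int01 (fun x => (x/s)^k * (Du 0%nat x)^2) else 0).

Lemma per_n s s' k l f Df u Du M n :
  0 < s -> s < s' -> (k + l <= 3)%nat -> 0 <= M -> smooth01 f Df -> smooth01 u Du ->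
  (forall j x, 0 < x < 1 -> Rabs (Df j x) <= M * (/ s') ^ j * INR (fact j) ^ 2) ->
  gterm s k l (prodD Df Du) n <= M ^ 2 / (1 - s / s') *
     sum_f_R0 (fun j => (s / s') ^ j * (1 + INR j) ^ 3 * bseq s k l Du (n - j)%nat) n.
Proof.
  intros Hs Hs' HK HM Hf Hu Hb.
  set (q := s / s').
  assert (Hq : 0 < q < 1).
  { unfold q; split. apply Rdiv_lt_0_compat; lra. apply Rmult_lt_reg_r with s'; [lra|].
    unfold Rdiv; rewrite Rmult_assoc, Rinv_l, Rmult_1_r by lra; lra. }
  set (I := fun m => Int01 (fun x => (x / s) ^ k * (Du m x) ^ 2)).
  set (Th := sum_f_R0 (fun j => q ^ j) n).
  assert (HTh : 0 < Th) by (apply sum_pos; intros; apply pow_lt; lra).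
  assert (HTh1 : Th <= 1 / (1 - q)).
  { unfold Th. rewrite tech3 by lra. unfold Rdiv. apply Rmult_le_compat_r.
    left; apply Rinv_0_lt_compat; lra. assert (0 <= q ^ S n) by (apply pow_le; lra). lra. }
  set (beta := fun j : nat => M * (/ s') ^ j * INR (fact j) ^ 2).
  set (c := fun j : nat => INR (bin n j) ^ 2 * beta j ^ 2 / q ^ j).
  assert (Hsm := smooth_prod f Df u Du Hf Hu).
  assert (HA : Int01 (fun x => (x / s) ^ k * (prodD Df Du n x) ^ 2)
               <= sum_f_R0 (fun j => (Th * c j) * I (n - j)%nat) n).
  { destruct (Int01_sum (fun j => Th * c j) (fun j x => (x / s) ^ k * (Du (n - j)%nat x) ^ 2) n)
      as [pr E]. { intros; apply (w_integrable s k Du u Hu). }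
    unfold I; rewrite <- E. apply Int01_le. apply (w_integrable s k _ _ Hsm). exact pr.
    intros x Hx.
    assert (Hw : 0 <= (x / s) ^ k) by (apply pow_le; unfold Rdiv; apply Rmult_le_pos; [lra|left; apply Rinv_0_lt_compat; lra]).
    assert (CS := CS_weighted (fun j => INR (bin n j) * Df j x * Du (n - j)%nat x) (fun j => q ^ j) n
                   (fun j _ => pow_lt q j (proj1 Hq))).
    fold Th in CS.
    assert (S2 : sum_f_R0 (fun j => (INR (bin n j) * Df j x * Du (n - j)%nat x) ^ 2 / q ^ j) n
                 <= sum_f_R0 (fun j => c j * Du (n - j)%nat x ^ 2) n).
    { apply sum_Rle; intros j Hj. unfold c.
      assert (Hd : Df j x ^ 2 <= beta j ^ 2).
      { rewrite <- pow2_abs. apply pow_incr. split; [apply Rabs_pos| apply Hb; auto]. }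
      assert (0 < q ^ j) by (apply pow_lt; lra).
      unfold Rdiv. rewrite !Rpow_mult_distr.
      replace (INR (bin n j) ^ 2 * beta j ^ 2 * / q ^ j * Du (n - j)%nat x ^ 2)
        with ((INR (bin n j) ^ 2 * / q ^ j * Du (n - j)%nat x ^ 2) * beta j ^ 2) by ring.
      replace (INR (bin n j) ^ 2 * Df j x ^ 2 * Du (n - j)%nat x ^ 2 * / q ^ j)
        with ((INR (bin n j) ^ 2 * / q ^ j * Du (n - j)%nat x ^ 2) * Df j x ^ 2) by ring.
      apply Rmult_le_compat_l; auto.
      apply Rmult_le_pos; [apply Rmult_le_pos; [apply pow2_ge_0| left; apply Rinv_0_lt_compat; auto]| apply pow2_ge_0]. }
    assert (Eq : sum_f_R0 (fun j => Th * c j * ((x / s) ^ k * Du (n - j)%nat x ^ 2)) n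
                 = (x / s) ^ k * (Th * sum_f_R0 (fun j => c j * Du (n - j)%nat x ^ 2) n)).
    { rewrite scal_sum, scal_sum. apply sum_eq; intros; ring. }
    rewrite Eq. apply Rmult_le_compat_l; auto.
    unfold prodD, LS. apply Rle_trans with (1 := CS). apply Rmult_le_compat_l; lra. }
  assert (F3 : forall j, (j <= n)%nat -> INR n ^ (k + l) * alpha s (n - j) * I (n - j)%nat
                 <= (1 + INR j) ^ 3 * bseq s k l Du (n - j)).
  { intros j Hj. unfold bseq. rewrite gterm_eq. fold (I (n - j)%nat).
    assert (HI : 0 <= I (n - j)%nat) by (apply (I_ge0 s k Du u); auto).
    assert (Ha := alpha_ge0 s (n - j) Hs).
    destruct (Nat.eqb (n - j) 0) eqn:E.
    - apply Nat.eqb_eq in E. rewrite E in *. rewrite alpha0. replace j with n by lia.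
      assert (H1 := n0_bound n (k + l) HK).
      assert (0 <= 1 * INR 0 ^ (k + l) * I 0%nat) by (apply Rmult_le_pos; [rewrite Rmult_1_l; apply pow_le, pos_INR|auto]).
      fold (I 0%nat). assert (0 <= (1 + INR n) ^ 3) by (apply pow_le; assert (0 <= INR n) by apply pos_INR; lra).
      nra.
    - apply Nat.eqb_neq in E. rewrite Rplus_0_r.
      assert (H1 := nK_bound n j (k + l) Hj HK ltac:(lia)).
      assert (0 <= alpha s (n - j) * I (n - j)%nat) by (apply Rmult_le_pos; auto).
      apply Rmult_le_compat_r with (r := alpha s (n - j) * I (n - j)%nat) in H1; auto.
      replace (INR n ^ (k + l) * alpha s (n - j) * I (n - j)%nat) with (INR n ^ (k + l) * (alpha s (n - j) * I (n - j)%nat)) by ring.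
      eapply Rle_trans; [exact H1|]. right; ring. }
  assert (F2 : forall j, (j <= n)%nat -> alpha s n * c j <= M ^ 2 * q ^ j * alpha s (n - j)).
  { intros j Hj. assert (Hc := coef_bound s s' n j Hs ltac:(lra) Hj). fold q in Hc.
    assert (0 < q ^ j) by (apply pow_lt; lra).
    replace (alpha s n * c j) with (M ^ 2 * (alpha s n * INR (bin n j) ^ 2 * ((/ s') ^ j * INR (fact j) ^ 2) ^ 2) / q ^ j)
      by (unfold c, beta; field; lra).
    replace (M ^ 2 * q ^ j * alpha s (n - j)) with (M ^ 2 * (q ^ (2 * j) * alpha s (n - j)) / q ^ j).
    2:{ rewrite pow_mult. replace ((q ^ 2) ^ j) with (q ^ j * q ^ j) by (rewrite <- Rpow_mult_distr; f_equal; ring). field; lra. }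
    unfold Rdiv. apply Rmult_le_compat_r; [left; apply Rinv_0_lt_compat; auto|].
    apply Rmult_le_compat_l; [apply pow2_ge_0|auto]. }
  rewrite gterm_eq.
  assert (HnK : 0 <= alpha s n * INR n ^ (k + l)) by (apply Rmult_le_pos; [apply alpha_ge0; auto|apply pow_le, pos_INR]).
  eapply Rle_trans. { apply Rmult_le_compat_l; [exact HnK| exact HA]. }
  rewrite scal_sum, scal_sum. apply sum_Rle. intros j Hj.
  assert (HI : 0 <= I (n - j)%nat) by (apply (I_ge0 s k Du u); auto).
  assert (Hn0 : 0 <= INR n ^ (k + l)) by (apply pow_le, pos_INR).
  assert (Hqj : 0 < q ^ j) by (apply pow_lt; lra).
  assert (Hb0 : 0 <= bseq s k l Du (n - j)).
  { unfold bseq. assert (0 <= gterm s k l Du (n - j)) by (eapply gterm_ge0; eauto).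
    destruct Nat.eqb; [|lra]. assert (0 <= I 0%nat) by (apply (I_ge0 s k Du u); auto). unfold I in *; lra. }
  assert (G1 := F2 j Hj). assert (G3 := F3 j Hj).
  apply Rle_trans with (Th * INR n ^ (k + l) * I (n - j)%nat * (M ^ 2 * q ^ j * alpha s (n - j))).
  { replace (Th * c j * I (n - j)%nat * (alpha s n * INR n ^ (k + l)))
      with (Th * INR n ^ (k + l) * I (n - j)%nat * (alpha s n * c j)) by ring.
    apply Rmult_le_compat_l; auto. apply Rmult_le_pos; [apply Rmult_le_pos|]; lra. }
  replace (Th * INR n ^ (k + l) * I (n - j)%nat * (M ^ 2 * q ^ j * alpha s (n - j)))
    with ((Th * M ^ 2 * q ^ j) * (INR n ^ (k + l) * alpha s (n - j) * I (n - j)%nat)) by ring.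
  assert (0 <= M ^ 2) by apply pow2_ge_0.
  apply Rle_trans with ((Th * M ^ 2 * q ^ j) * ((1 + INR j) ^ 3 * bseq s k l Du (n - j))).
  { apply Rmult_le_compat_l; auto. apply Rmult_le_pos; [apply Rmult_le_pos|]; lra. }
  assert (0 <= (1 + INR j) ^ 3 * bseq s k l Du (n - j)).
  { apply Rmult_le_pos; auto. apply pow_le. assert (0 <= INR j) by apply pos_INR. lra. }
  replace ((q ^ j * (1 + INR j) ^ 3 * bseq s k l Du (n - j)) * (M ^ 2 / (1 - q)))
    with ((1 / (1 - q) * M ^ 2 * q ^ j) * ((1 + INR j) ^ 3 * bseq s k l Du (n - j))) by (field; lra).
  apply Rmult_le_compat_r; auto.
  apply Rmult_le_compat_r; [lra|]. apply Rmult_le_compat_r; auto.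
Qed.


Lemma sum_bseq s k l Du N : sum_f_R0 (bseq s k l Du) N =
  sum_f_R0 (gterm s k l Du) N + Int01 (fun x => (x/s)^k * (Du 0%nat x)^2).
Proof. induction N. unfold bseq; simpl. ring.
  rewrite !tech5, IHN. unfold bseq. simpl Nat.eqb. cbv iota. ring. Qed.

Lemma partial_le s k l Du u SS : 0 < s -> smooth01 u Du ->
  Un_cv (fun N => sum_f_R0 (gterm s k l Du) N) SS ->
  forall N, sum_f_R0 (gterm s k l Du) N <= SS.
Proof. intros Hs Hu H. apply growing_ineq; auto. intro n. simpl.
  assert (0 <= gterm s k l Du (S n)) by (eapply gterm_ge0; eauto). lra. Qed.

Lemma seminorm_eq s k l D S : Un_cv (fun N => sum_f_R0 (gterm s k l D) N) S ->
  seminorm0 s k l D = sqrt S.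
Proof. intros H. unfold seminorm0. f_equal.
  assert (E := epsilon_spec (inhabits 0) (fun S => Un_cv (fun N => sum_f_R0 (gterm s k l D) N) S) (ex_intro _ S H)).
  eapply UL_sequence; eauto. Qed.

Theorem mainTheorem4 :
  forall (sigma sigma' : R) (k l : nat) (f : R -> R) (Df : nat -> R -> R),
    0 < sigma -> sigma < sigma' -> (k <= 2)%nat -> (l <= 1)%nat ->
    smooth01 f Df -> gevrey sigma' 2 Df ->
    exists C : R,
      forall (u : R -> R) (Du : nat -> R -> R),
        smooth01 u Du -> in_G sigma k l Du ->
        exists Dfu : nat -> R -> R,
          smooth01 (fun x => f x * u x) Dfu /\
          in_G sigma k l Dfu /\
          gnorm sigma k l Dfu <= C * gnorm sigma k l Du.
Proof.
  intros s s' k l f Df Hs Hss Hk Hl Hf [M HM].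
  assert (HK : (k + l <= 3)%nat) by lia.
  set (q := s / s').
  assert (Hq : 0 < q < 1).
  { unfold q; split. apply Rdiv_lt_0_compat; lra. apply Rmult_lt_reg_r with s'; [lra|].
    unfold Rdiv; rewrite Rmult_assoc, Rinv_l, Rmult_1_r by lra; lra. }
  assert (HM0 : 0 <= M).
  { assert (H := HM 0%nat (1/2) ltac:(lra)). simpl in H. assert (0 <= Rabs (Df 0%nat (1/2))) by apply Rabs_pos. lra. }
  destruct (gamma_bound q Hq) as [G HG].
  assert (HG0 : 0 <= G).
  { assert (H := HG 0%nat). simpl in H. lra. }
  set (A := M ^ 2 / (1 - q) * G).
  assert (HA : 0 <= A).
  { unfold A. apply Rmult_le_pos; auto. unfold Rdiv; apply Rmult_le_pos; [apply pow2_ge_0|left; apply Rinv_0_lt_compat; lra]. }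
  exists (sqrt (2 * A) + M).
  intros u Du Hu [SS HS].
  set (I0 := Int01 (fun x => (x / s) ^ k * (Du 0%nat x) ^ 2)).
  assert (HI0 : 0 <= I0) by (apply (I_ge0 s k Du u); auto).
  assert (HPS := partial_le s k l Du u SS Hs Hu HS).
  assert (HS0 : 0 <= SS).
  { apply Rle_trans with (2 := HPS 0%nat). simpl. eapply gterm_ge0; eauto. }
  exists (prodD Df Du).
  assert (Hsm := smooth_prod f Df u Du Hf Hu).
  assert (Bnd : forall N, sum_f_R0 (gterm s k l (prodD Df Du)) N <= A * (SS + I0)).
  { intros N.
    apply Rle_trans with (sum_f_R0 (fun n => M ^ 2 / (1 - q) *
       sum_f_R0 (fun j => q ^ j * (1 + INR j) ^ 3 * bseq s k l Du (n - j)%nat) n) N).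
    { apply sum_Rle; intros n _. apply (per_n s s' k l f Df u Du M n); auto. }
    assert (Esc : forall (a : nat -> R) c N, sum_f_R0 (fun n => c * a n) N = c * sum_f_R0 a N)
      by (intros; rewrite scal_sum; apply sum_eq; intros; ring).
    rewrite Esc. unfold A. rewrite Rmult_assoc. apply Rmult_le_compat_l.
    { unfold Rdiv; apply Rmult_le_pos; [apply pow2_ge_0|left; apply Rinv_0_lt_compat; lra]. }
    assert (Hb : forall m, 0 <= bseq s k l Du m).
    { intros m. unfold bseq. assert (0 <= gterm s k l Du m) by (eapply gterm_ge0; eauto).
      destruct Nat.eqb; [fold I0|]; lra. }
    eapply Rle_trans.
    { apply (cauchy_le N (fun j => q ^ j * (1 + INR j) ^ 3) (bseq s k l Du)); auto.
      intros j. apply Rmult_le_pos; [apply pow_le; lra| apply pow_le; assert (0 <= INR j) by apply pos_INR; lra]. }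
    rewrite sum_bseq. fold I0.
    assert (0 <= sum_f_R0 (bseq s k l Du) N) by (apply sum_ge0; auto).
    rewrite sum_bseq in H. fold I0 in H.
    apply Rmult_le_compat; auto.
    - apply sum_ge0; intros j _. apply Rmult_le_pos; [apply pow_le; lra| apply pow_le; assert (0 <= INR j) by apply pos_INR; lra].
    - specialize (HPS N). lra. }
  assert (Hgr : Un_growing (fun N => sum_f_R0 (gterm s k l (prodD Df Du)) N)).
  { intro n. simpl. assert (0 <= gterm s k l (prodD Df Du) (S n)) by (eapply gterm_ge0; eauto). lra. }
  destruct (growing_cv _ Hgr) as [S' HS'].
  { exists (A * (SS + I0)). intros x [i ->]. apply Bnd. }
  assert (HS'le : S' <= A * (SS + I0)) by (eapply lim_le; eauto).
  split; [exact Hsm|]. split; [exists S'; exact HS'|].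
  set (J0 := Int01 (fun x => (x / s) ^ k * (prodD Df Du 0%nat x) ^ 2)).
  assert (HJ0 : J0 <= M ^ 2 * I0).
  { destruct (Int01_sum (fun _ => M ^ 2) (fun _ x => (x / s) ^ k * (Du 0%nat x) ^ 2) 0) as [pr E].
    { intros; apply (w_integrable s k Du u Hu). }
    cbn [sum_f_R0] in E. unfold I0; rewrite <- E. apply Int01_le. apply (w_integrable s k _ _ Hsm). exact pr.
    intros x Hx. cbn [sum_f_R0]. unfold prodD, LS; cbn [sum_f_R0 bin Nat.sub]. change (INR 1) with 1.
    assert (H := HM 0%nat x Hx). simpl pow in H. simpl fact in H. change (INR 1) with 1 in H.
    assert (Hd : Df 0%nat x ^ 2 <= M ^ 2).
    { rewrite <- pow2_abs. apply pow_incr. split; [apply Rabs_pos|lra]. }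
    assert (Hw := w_ge0 s k (Du 0%nat) x Hs ltac:(lra)).
    replace ((x / s) ^ k * (1 * Df 0%nat x * Du 0%nat x) ^ 2)
      with (Df 0%nat x ^ 2 * ((x / s) ^ k * Du 0%nat x ^ 2)) by ring.
    apply Rmult_le_compat_r; auto. }
  assert (HJ00 : 0 <= J0) by (apply (I_ge0 s k _ (fun x => f x * u x)); auto).
  assert (HS'0 : 0 <= S') by (apply Rle_trans with (2 := growing_ineq _ _ Hgr HS' 0%nat); simpl; eapply gterm_ge0; eauto).
  unfold gnorm. rewrite (seminorm_eq _ _ _ _ _ HS), (seminorm_eq _ _ _ _ _ HS').
  fold I0 J0.
  assert (Hsq2 : sqrt A <= sqrt (2 * A)) by (apply sqrt_le_1_alt; lra).
  assert (0 <= sqrt A) by apply sqrt_pos.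
  assert (0 <= sqrt SS) by apply sqrt_pos.
  assert (0 <= sqrt I0) by apply sqrt_pos.
  destruct (Nat.eqb (k + l) 0) eqn:EK.
  - apply Nat.eqb_eq in EK.
    assert (HI0S : I0 <= SS).
    { assert (H9 := HPS 0%nat). cbn [sum_f_R0] in H9. rewrite gterm_eq, alpha0, EK, pow_O in H9. unfold I0. lra. }
    apply Rle_trans with (sqrt (2 * A) * sqrt SS).
    + rewrite <- sqrt_mult by lra. apply sqrt_le_1_alt. nra.
    + assert (0 <= M * sqrt SS) by (apply Rmult_le_pos; auto). nra.
  - assert (E1 : sqrt S' <= sqrt A * sqrt SS + sqrt A * sqrt I0).
    { rewrite <- !sqrt_mult by lra. eapply Rle_trans; [apply sqrt_le_1_alt; exact HS'le|].
      rewrite Rmult_plus_distr_l. apply sqrt_add_le; apply Rmult_le_pos; lra. }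
    assert (E2 : sqrt J0 <= M * sqrt I0).
    { eapply Rle_trans; [apply sqrt_le_1_alt; exact HJ0|]. rewrite sqrt_mult by (try apply pow2_ge_0; lra).
      rewrite sqrt_pow2 by lra. lra. }
    assert (0 <= M * sqrt SS) by (apply Rmult_le_pos; auto).
    nra.
Qed.
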